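(* Let $K\ge 2$, $m\in\{1,\dots,K-1\}$, $M=\frac{m}{K}$, and $L\in\{1,\dots,K-1\}$. For integers $0\le j\le m+1$ define $$R_K(M,L,j)=1+\frac{\sum_{i=\max(0,m-L+1)}^{\min(j-1,K-L)}\binom{K-L}{i}\binom{L-1}{m-i}+\sum_{i=\max(j,m-L)}^{\min(m,K-L-1)}\binom{K-L-1}{i}\binom{L}{m-i}}{\binom{K}{m}}.$$ Then there exists a minimizer $j^*\in\arg\min_{0\le j\le m+1}R_K(M,L,j)$ satisfying $j^*=\left\lceil m\left(1-\frac{L}{K}\right)\right\rceil$.
   Context: Binomial coefficients $\binom{a}{b}$ are $0$ when $b<0$ or $b>a$, and empty sums (upper limit smaller than lower limit) are $0$. *)

(* Defs.v *)
From HB Require Import structures.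
From mathcomp Require Import all_boot all_order all_algebra.
Set Implicit Arguments. Unset Strict Implicit. Unset Printing Implicit Defensive.
Import Order.TTheory GRing.Theory Num.Theory.

(* Integer summation bounds are translated to nat ranges:
   i from max(0, m-L+1) to min(j-1, K-L) inclusive  ==  [ (m+1-L) , minn j (K-L+1) )
   i from max(j, m-L) to min(m, K-L-1) inclusive    ==  [ maxn j (m-L) , minn (m+1) (K-L) )
   (truncated nat subtraction coincides with max with 0; empty ranges give 0). *)
Definition R_K (K m L j : nat) : rat :=
  1 + ((\sum_((m.+1 - L) <= i < minn j (K - L).+1) 'C(K - L, i) * 'C(L - 1, m - i)
        + \sum_(maxn j (m - L) <= i < minn m.+1 (K - L)) 'C(K - L - 1, i) * 'C(L, m - i))%N%:R
       / ('C(K, m))%:R).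

(* Main.v *)
Require Import Defs.
From HB Require Import structures.
From mathcomp Require Import all_boot all_order all_algebra.
From mathcomp Require Import zify ring.
Import Order.TTheory GRing.Theory Num.Theory.

Lemma sum_cond (lo hi N : nat) (g : nat -> nat) : (hi <= N)%N ->
  (\sum_(lo <= i < hi) g i = \sum_(0 <= i < N) (if (lo <= i < hi)%N then g i else 0))%N.
Proof.
move=> hN.
case: (leqP hi lo) => hl.
  rewrite big_geq // big1 // => i _; case: ifP => //; lia.
rewrite [RHS](big_cat_nat (n:=lo)) //=; try lia.
rewrite [X in (_ = _ + X)%N](big_cat_nat (m:=lo) (n:=hi)) //=; try lia.
rewrite [X in (_ = X + _)%N]big1_seq; last by move=> i; rewrite mem_index_iota; case: ifP => //; lia.
rewrite [X in (_ = _ + (_ + X))%N]big1_seq; last by move=> i; rewrite mem_index_iota; case: ifP => //; lia.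
rewrite add0n addn0; apply: eq_big_seq => i; rewrite mem_index_iota => ->//.
Qed.

Section Main.
Variables (K m L : nat).
Hypotheses (hK : (2 <= K)%N) (hm1 : (1 <= m)%N) (hm2 : (m <= K - 1)%N)
  (hL1 : (1 <= L)%N) (hL2 : (L <= K - 1)%N).

Let n := (K - L)%N.
Let g (i : nat) := ('C(n, i) * 'C(L - 1, m - i))%N.
Let h (i : nat) := ('C(n - 1, i) * 'C(L, m - i))%N.

Lemma S1 j : (j <= m.+1)%N ->
  (\sum_((m.+1 - L) <= i < minn j n.+1) g i = \sum_(0 <= i < j) g i)%N.
Proof.
move=> hj; have hn : n = (K - L)%N by []; rewrite (sum_cond _ _ m.+2); last by lia.
rewrite [RHS](sum_cond _ _ m.+2); last by lia.
apply: eq_bigr => i _.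
have z : (i < m.+1 - L \/ n < i)%N -> g i = 0%N.
  case=> hi; rewrite /g.
    by rewrite [X in (_ * X)%N]bin_small ?muln0 //; lia.
  by rewrite bin_small ?mul0n.
case: ifP => h1; case: ifP => h2 //; rewrite z //; lia.
Qed.

Lemma S2 j : (j <= m.+1)%N ->
  (\sum_(maxn j (m - L) <= i < minn m.+1 n) h i = \sum_(j <= i < m.+1) h i)%N.
Proof.
move=> hj; have hn : n = (K - L)%N by []; rewrite (sum_cond _ _ m.+2); last by lia.
rewrite [RHS](sum_cond _ _ m.+2); last by lia.
apply: eq_bigr => i _.
have z : (i < m - L \/ n <= i)%N -> h i = 0%N.
  case=> hi; rewrite /h.
    by rewrite [X in (_ * X)%N]bin_small ?muln0 //; lia.
  by rewrite bin_small ?mul0n //; lia.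
case: ifP => h1; case: ifP => h2 //; rewrite z //; lia.
Qed.

Let F j := (\sum_(0 <= i < j) g i + \sum_(j <= i < m.+1) h i)%N.

Lemma step j : (j <= m)%N -> (F j.+1 + h j = F j + g j)%N.
Proof.
move=> hj; rewrite /F big_nat_recr //= [X in (_ = _ + X + _)%N]big_ltn //; lia.
Qed.

Lemma sign j : (j <= m)%N ->
  ((j * K < m * n)%N -> (g j <= h j)%N) /\ ((m * n <= j * K)%N -> (h j <= g j)%N).
Proof.
move=> hj; set k := (m - j)%N.
have hn1 : (1 <= n)%N by rewrite /n; lia.
have e1 : (n * 'C(n - 1, j) = (n - j) * 'C(n, j))%N by rewrite subn1 mul_bin_down.
have e2 : (L * 'C(L - 1, k) = (L - k) * 'C(L, k))%N by rewrite subn1 mul_bin_down.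
have hm : m = (j + k)%N by rewrite /k; lia.
have hKn : K = (n + L)%N by rewrite /n; lia.
rewrite /g /h -/k.
case: (ltnP j n) => hjn; last first.
  have hx : 'C(n - 1, j) = 0%N by rewrite bin_small //; lia.
  rewrite hx mul0n.
  split=> // H; exfalso; nia.
case: (ltnP k L) => hkL; last first.
  have hy : 'C(L - 1, k) = 0%N by rewrite bin_small //; lia.
  rewrite hy muln0.
  split=> // H; exfalso; nia.
set x := 'C(n-1, j) in e1 *; set y := 'C(L-1, k) in e2 *.
have pos : (0 < (n - j) * (L - k))%N by rewrite muln_gt0; apply/andP; split; lia.
have A : ((n - j) * (L - k) * ('C(n, j) * y) = (L - k) * n * (x * y))%N.
  rewrite [RHS](_ : _ = (L - k) * ((n * x) * y))%N; last by ring.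
  by rewrite e1; ring.
have B : ((n - j) * (L - k) * (x * 'C(L, k)) = (n - j) * L * (x * y))%N.
  rewrite [RHS](_ : _ = (n - j) * x * (L * y))%N; last by ring.
  by rewrite e2; ring.
split=> H.
  rewrite -(leq_pmul2l pos) A B leq_mul2r; apply/orP; right; nia.
rewrite -(leq_pmul2l pos) A B leq_mul2r; apply/orP; right; nia.
Qed.

Let c := ((m * n).-1 %/ K + 1)%N.

Lemma hc j : (j < c)%N = (j * K < m * n)%N.
Proof.
have hn : n = (K - L)%N by [].
have mnp : (0 < m * n)%N by rewrite muln_gt0; apply/andP; split; lia.
rewrite /c addn1 ltnS leq_divRL; last by lia.
lia.
Qed.

Lemma c_le : (c <= m)%N.
Proof.
have hn : n = (K - L)%N by [].
case: (leqP c m) => // H; have := hc m; rewrite H => /esym/idP; nia.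
Qed.

Lemma minF j : (j <= m.+1)%N -> (F c <= F j)%N.
Proof.
move=> hj; case: (leqP j c) => hjc.
  have : forall d j, (j + d = c)%N -> (F c <= F j)%N.
    elim=> [j0|d IH j0 e]; first by rewrite addn0 => ->.
    have H1 := IH j0.+1 ltac:(lia).
    have hj0 : (j0 <= m)%N by have := c_le; lia.
    have [H2 _] := sign _ hj0.
    have H3 := H2 ltac:(rewrite -hc; lia).
    have := step _ hj0; lia.
  by move=> /(_ (c - j)%N j) ->; lia.
have : forall d, (c + d <= m.+1)%N -> (F c <= F (c + d))%N.
  elim=> [|d IH hd]; first by rewrite addn0.
  have hj0 : (c + d <= m)%N by lia.
  have [_ H2] := sign _ hj0.
  have H3 := H2 ltac:(have := hc (c + d); lia).
  have := step _ hj0; rewrite addnS; have := IH ltac:(lia); lia.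
by move=> /(_ (j - c)%N); rewrite subnKC; [apply|lia].
Qed.

Lemma RK_eq j : (j <= m.+1)%N ->
  R_K K m L j = (1 + (F j)%:R / ('C(K, m))%:R)%R.
Proof.
by move=> hj; rewrite /R_K (S1 _ hj) (S2 _ hj).
Qed.

Lemma main_min : exists jstar : nat,
    [/\ (jstar <= m.+1)%N,
        (forall j : nat, (j <= m.+1)%N -> (R_K K m L jstar <= R_K K m L j)%R)
      & (jstar%:Z = Num.ceil ((m%:R : rat) * (1 - (L%:R : rat) / (K%:R : rat))))%R].
Proof.
exists c; split.
- by have := c_le; lia.
- move=> j hj; rewrite (RK_eq _ hj) RK_eq; last by have := c_le; lia.
  rewrite lerD2l ler_wpM2r ?invr_ge0 ?ler0n // ler_nat; exact: minF.
- have hn : n = (K - L)%N by [].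
  have Kp : (0 < K%:R :> rat)%R by rewrite ltr0n; lia.
  have ex : ((m%:R : rat) * (1 - (L%:R : rat) / (K%:R : rat)) = (m * n)%N%:R / K%:R)%R.
    rewrite hn natrM natrB; last by lia.
    by field; rewrite pnatr_eq0; lia.
  rewrite ex.
  set c' := ((m * n).-1 %/ K)%N.
  have e1 : ((m * n)%N%:R / (K%:R : rat) <= (c%:Z)%:~R)%R.
    rewrite ler_pdivrMr // -[((c%:Z)%:~R)%R]/((c%:R)%R) -natrM ler_nat.
    by have := hc c; rewrite ltnn; lia.
  have e2 : ((c'%:Z)%:~R < (m * n)%N%:R / (K%:R : rat))%R.
    rewrite ltr_pdivlMr // -[((c'%:Z)%:~R)%R]/((c'%:R)%R) -natrM ltr_nat.
    by have := hc c'; rewrite /c addn1 ltnSn; lia.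
  rewrite -ceil_le_int in e1; rewrite -ceil_gt_int in e2.
  apply/eqP; rewrite eq_le e1 /=.
  rewrite andbT; move: e2; rewrite /c /c'; set z := Num.ceil _; lia.
Qed.

End Main.

Theorem proposition1 (K m L : nat) (hK : (2 <= K)%N)
  (hm1 : (1 <= m)%N) (hm2 : (m <= K - 1)%N)
  (hL1 : (1 <= L)%N) (hL2 : (L <= K - 1)%N) :
  exists jstar : nat,
    [/\ (jstar <= m.+1)%N,
        (forall j : nat, (j <= m.+1)%N -> (R_K K m L jstar <= R_K K m L j)%R)
      & (jstar%:Z = Num.ceil ((m%:R : rat) * (1 - (L%:R : rat) / (K%:R : rat))))%R].
Proof. exact: main_min. Qed.
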